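(* Let $G$ be a finite group, $H$ a core-free subgroup of $G$, and $S$ a right transversal of $H$ in $G$ which generates $G$, is nilpotent with respect to its induced right loop structure, and has $|S|=p^n$ for some prime $p$ and $n\in\mathbb N$. Then both $H$ and $G$ are $p$-groups.
   Context: For $H\le G$, a right transversal $S$ contains exactly one element of each right coset $Hg$, with $1\in S$; its induced operation is $x\circ y=$ the unique element of $S\cap Hxy$, making $(S,\circ)$ a right loop (two-sided identity, each equation $X\circ a=b$ uniquely solvable). $H$ is core-free if $\bigcap_{g\in G}g^{-1}Hg=\{1\}$. A congruence on a right loop $S$ is an equivalence relation which is a right subloop of $S\times S$; an invariant right subloop is the class $T$ of $1$ under a congruence, $S/T=\{T\circ x\}$ with $(T\circ x)\circ(T\circ y)=T\circ(x\circ y)$. For congruences $\beta,\gamma$, $\gamma$ centralizes $\beta$ if there is a congruence $(\gamma|\beta)$ on the right loop $\beta\subseteq S\times S$ with: (i) $(x,y)(\gamma|\beta)(u,v)\Rightarrow x\gamma u$; (ii) for $(x,y)\in\beta$, $(u,v)\mapsto u$ is a bijection from the $(\gamma|\beta)$-class of $(x,y)$ to the $\gamma$-class of $x$; (iii) $(x,y)\in\gamma\Rightarrow(x,x)(\gamma|\beta)(y,y)$; (iv) $(x,y)(\gamma|\beta)(u,v)\Rightarrow(y,x)(\gamma|\beta)(v,u)$; (v) $(x,y)(\gamma|\beta)(u,v)$, $(y,z)(\gamma|\beta)(v,w)\Rightarrow(x,z)(\gamma|\beta)(u,w)$. The center $\mathcal Z(S)$ is the class of $1$ under the unique maximal congruence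 centralized by $S\times S$. $S$ is nilpotent if the series $\mathcal Z_0=\{1\}$, $\mathcal Z_1=\mathcal Z(S)$, $\mathcal Z_{i+1}/\mathcal Z_i=\mathcal Z(S/\mathcal Z_i)$ reaches $\mathcal Z_n=S$ for some $n$. *)

(* Defs.v *)
From HB Require Import structures.
From mathcomp Require Import all_boot all_order all_fingroup all_solvable.
Set Implicit Arguments. Unset Strict Implicit. Unset Printing Implicit Defensive.

(* Right loops (and their quotients) are represented this way; the right-loop
   axioms are not bundled since they are facts, not data. *)
Record magma1 := Magma1 {
  m_T : finType;
  m_op : m_T -> m_T -> m_T;
  m_one : m_T }.

Section RightLoops.
Variable L : magma1.
Local Notation T := (m_T L).
Local Notation op := (@m_op L).

Definition pop (p q : T * T) : T * T := (op p.1 q.1, op p.2 q.2).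

(* A congruence: an equivalence relation whose graph is a right subloop of
   S x S (contains (1,1) by reflexivity, closed under the product and under
   right division, i.e. solutions X of X o a = b with a, b in the graph). *)
Definition congruence (r : rel T) : Prop :=
  [/\ (forall x, r x x), (forall x y, r x y -> r y x),
      (forall x y z, r x y -> r y z -> r x z),
      (forall x y u v, r x u -> r y v -> r (op x y) (op u v)) &
      (forall a b c d x z, r a c -> r b d -> op x a = b -> op z c = d -> r x z)].

Definition centralizes (gam beta : rel T) : Prop :=
  exists R : rel (T * T),
    let inB := fun p : T * T => beta p.1 p.2 in
    [/\ (* R is a congruence on the right loop beta *)
        [/\ (forall p q, R p q -> inB p && inB q),
            (forall p, inB p -> R p p),
            (forall p q, R p q -> R q p),
            (forall p q s, R p q -> R q s -> R p s) &
            (forall p q p' q', R p q -> R p' q' -> R (pop p p') (pop q q'))],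
        (forall p q p' q' p'' q'', R p q -> R p' q' ->
                 pop p'' p = p' -> pop q'' q = q' -> R p'' q'') &
        [/\ (forall x y u v, R (x, y) (u, v) -> gam x u),
        (forall x y u, beta x y -> gam x u ->
                      exists! v, R (x, y) (u, v)),
        (forall x y, gam x y -> R (x, x) (y, y)),
        (forall x y u v, R (x, y) (u, v) -> R (y, x) (v, u)) &
        (forall x y z u v w,
                 R (x, y) (u, v) -> R (y, z) (v, w) -> R (x, z) (u, w))]].

Definition total_rel : rel T := fun _ _ => true.

(* z is the unique maximal congruence centralized by S x S (its class of 1 is
   the center). *)
Definition is_center_cong (z : rel T) : Prop :=
  [/\ congruence z, centralizes total_rel z &
      forall g, congruence g -> centralizes total_rel g ->
        forall x y, g x y -> z x y].

Definition cls (r : rel T) (x : T) : {set T} := [set y | r x y].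

Definition qpred (r : rel T) : pred {set T} :=
  fun C => [exists x, C == cls r x].

Definition qT (r : rel T) : finType :=
  Finite.clone {C : {set T} | qpred r C} _.

Lemma qcls_proof (r : rel T) (x : T) : qpred r (cls r x).
Proof. by apply/existsP; exists x. Qed.

Definition qcls (r : rel T) (x : T) : qT r := exist _ (cls r x) (qcls_proof r x).

Definition qrep (r : rel T) (C : qT r) : T :=
  odflt (@m_one L) [pick x | val C == cls r x].

Definition quot (r : rel T) : magma1 :=
  @Magma1 (qT r) (fun C D => qcls r (op (qrep C) (qrep D))) (qcls r (@m_one L)).

End RightLoops.

(* Nilpotency: the upper central series, written via the congruences th i
   whose classes of 1 are Z_i:  Z_0 = {1}, Z_{i+1}/Z_i = Z(S/Z_i), Z_n = S. *)
Definition nilpotent_loop (L : magma1) : Prop :=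
  exists (n : nat) (th : nat -> rel (m_T L)),
    [/\ (forall x y, th 0 x y = (x == y)),
        (forall x y, th n x y) &
        forall i, i < n ->
          congruence (th i) /\
          exists z : rel (m_T (quot (th i))),
            is_center_cong z /\
            forall x y, th i.+1 x y = z (qcls (th i) x) (qcls (th i) y)].

Section Transversal.
Variables (gT : finGroupType) (H : {group gT}) (S : {set gT}).
Hypothesis S1 : (1 \in S)%g.

Definition ST : finType := Finite.clone {x : gT | x \in S} _.

Definition tr_op (x y : ST) : ST :=
  odflt x [pick z : ST | val z \in (H :* (val x * val y))%g].

Definition tr_one : ST := exist _ 1%g S1.

Definition transversal_loop : magma1 := @Magma1 ST tr_op tr_one.
End Transversal.

(* Main.v *)
Require Import Defs.
From mathcomp Require Import all_boot all_order all_fingroup all_solvable.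
Set Implicit Arguments. Unset Strict Implicit. Unset Printing Implicit Defensive.

Definition rloop (L : magma1) :=
 [/\ (forall x, @m_op L (@m_one L) x = x), (forall x, @m_op L x (@m_one L) = x),
  (forall a b, exists y, @m_op L y a = b) & (forall y y' a, @m_op L y a = @m_op L y' a -> y = y')].

Section Loop.
Variable L : magma1.
Local Notation T := (m_T L).
Local Notation op := (@m_op L).
Local Notation one := (@m_one L).

Hypothesis hL : rloop L.

Section Cong.
Variable r : rel T.
Hypothesis cr : congruence r.

Lemma cls_card a : #|cls r a| = #|cls r one|.
Proof.
case: hL => [o1x ox1 rdiv rc]; case: cr => [rr rs rt rop rd].
have ->: cls r a = (fun y => op y a) @: cls r one.
  apply/setP => w; apply/idP/imsetP.
    rewrite inE => raw; have [y hy] := rdiv a w.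
    exists y => //; rewrite inE; apply: (rs _ _); apply: (rd a w a a y one) => //.
    exact: (rs _ _ raw).
  by case=> y; rewrite !inE => r1y ->; rewrite -{1}(o1x a); apply: rop.
by rewrite card_imset // => y y'; apply: rc.
Qed.

Lemma qcls_eq x y : (qcls r x == qcls r y) = r x y.
Proof.
case: cr => [rr rs rt _ _]; apply/eqP/idP.
  move=> e; have: y \in cls r y by rewrite inE.
  by rewrite -[cls r y]/(val (qcls r y)) -e inE.
move=> rxy; apply: val_inj; apply/setP => w; rewrite !inE.
by apply/idP/idP => h; [apply: (rt _ _ _ (rs _ _ rxy)) | apply: (rt _ _ _ rxy)].
Qed.

Lemma qrepP x : r x (qrep (qcls r x)).
Proof.
case: cr => [rr _ _ _ _].
rewrite /qrep; case: pickP => [y /eqP e|].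
  have: y \in cls r y by rewrite inE.
  by rewrite -e inE.
by move/(_ x); rewrite eqxx.
Qed.

Lemma qclsK C : qcls r (qrep C) = C.
Proof.
have /existsP [x0 /eqP e0] := valP C.
apply: val_inj => /=; rewrite /qrep /=.
case: pickP => [y /eqP e|]; first by rewrite e.
by move/(_ x0); rewrite /= e0 eqxx.
Qed.
Lemma qop x y : @m_op (quot r) (qcls r x) (qcls r y) = qcls r (op x y).
Proof.
case: cr => [rr rs rt rop _]; apply/eqP; rewrite qcls_eq /=.
by apply: rop; apply: rs; apply: qrepP.
Qed.

Lemma qone : @m_one (quot r) = qcls r one.
Proof. by []. Qed.

Lemma qsurj (C : m_T (quot r)) : exists x, C = qcls r x.
Proof. by exists (qrep C); rewrite qclsK. Qed.

Lemma rloop_quot : rloop (quot r).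
Proof.
case: hL => [o1x ox1 rdiv rc]; case: cr => [rr rs rt rop rd].
split.
- by move=> C; have [x ->] := qsurj C; rewrite qone qop o1x.
- by move=> C; have [x ->] := qsurj C; rewrite qone qop ox1.
- move=> A B; have [a ->] := qsurj A; have [b ->] := qsurj B.
  by have [y hy] := rdiv a b; exists (qcls r y); rewrite qop hy.
- move=> Y Y' A; have [y ->] := qsurj Y; have [y' ->] := qsurj Y'.
  have [a ->] := qsurj A; rewrite !qop => /eqP; rewrite !qcls_eq => h.
  by apply/eqP; rewrite qcls_eq; apply: (rd a (op y a) a (op y' a)).
Qed.

Lemma card_quot_dvd : #|m_T (quot r)| %| #|T|.
Proof.
case: cr => [rr rs rt rop rd].
have eqi : {in [set: T] & &, equivalence_rel r}.
  move=> x y z _ _ _; split; first exact: rr.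
  move=> rxy; apply/idP/idP; first exact: rt (rs _ _ rxy).
  exact: rt.
have P := equivalence_partitionP eqi.
rewrite -[X in _ %| X]cardsT (@card_uniform_partition _ #|cls r one| _ _ _ P); last first.
  move=> B /imsetP [x _ ->]; rewrite -(cls_card x); apply: eq_card => y.
  by rewrite !inE.
apply: dvdn_mulr; rewrite /= card_sig.
suff ->: #|[pred x | qpred r x]| = #|equivalence_partition r [set: T]| by [].
apply: eq_card => C; rewrite inE /qpred; apply/existsP/imsetP.
  case=> x /eqP ->; exists x => //; apply/setP => y; rewrite !inE.
  by [].
case=> x _ ->; exists x; apply/eqP/setP => y; rewrite !inE.
by [].
Qed.
End Cong.

Section Central.
Variables (z : rel T) (R : rel (T * T)).
Hypothesis cz : congruence z.
Hypotheses (Rin : forall p q, R p q -> z p.1 p.2 && z q.1 q.2)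
  (Rrefl : forall p, z p.1 p.2 -> R p p)
  (Rsym : forall p q, R p q -> R q p)
  (Rtr : forall p q s, R p q -> R q s -> R p s)
  (Rop : forall p q p' q', R p q -> R p' q' -> R (pop p p') (pop q q'))
  (Rdiv : forall p q p' q' p'' q'', R p q -> R p' q' ->
                 pop p'' p = p' -> pop q'' q = q' -> R p'' q'')
  (Rii : forall x y u, z x y -> exists! v, R (x, y) (u, v))
  (Riii : forall x y, R (x, x) (y, y))
  (Riv : forall x y u v, R (x, y) (u, v) -> R (y, x) (v, u))
  (Rv : forall x y z u v w,
                 R (x, y) (u, v) -> R (y, z) (v, w) -> R (x, z) (u, w)).

Lemma Rtrans_op X Y s : z X Y -> R (X, Y) (op X s, op Y s).
Proof.
case: hL => [o1x ox1 _ _] zXY.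
have := Rop (Rrefl (p := (X, Y)) zXY) (Riii one s).
by rewrite /pop /= !ox1.
Qed.

Lemma Runiq a b u v v' : R (a, b) (u, v) -> R (a, b) (u, v') -> v = v'.
Proof.
move=> h1 h2; have /andP [zab _] := Rin h1.
have [w [_ uw]] := Rii u zab.
by rewrite -(uw _ h1) -(uw _ h2).
Qed.

Lemma Rfix x u v : R (x, x) (u, v) -> v = u.
Proof. by move=> h; apply: (Runiq h (Riii x u)). Qed.

Lemma Rexch x y u v : z x u -> R (x, y) (u, v) -> R (x, u) (y, v).
Proof.
case: hL => [o1x ox1 rdiv _]; case: cz => [zr zs zt _ _] zxu h.
have /andP [/= zxy _] := Rin h.
have [d1 hd1] := rdiv y x; have [e he] := rdiv u v.
have h1 : R (d1, one) (one, e).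
  apply: (Rdiv (Riii y u) h); by rewrite /pop /= ?hd1 ?he ?o1x.
have zyu : z y u by apply: zt (zs _ _ zxy) zxu.
have := Rop h1 (Rrefl (p := (y, u)) zyu).
by rewrite /pop /= hd1 he !o1x.
Qed.

Section Iter.
Variables (a b : T) (f : T -> T).
Hypothesis hf : forall u, R (a, b) (u, f u).

Lemma Rf u w : R (u, f u) (w, f w).
Proof. exact: Rtr (Rsym (hf u)) (hf w). Qed.

Lemma Rfj j u w : R (u, iter j f u) (w, iter j f w).
Proof.
elim: j => [|j IH] /=; first exact: Riii.
exact: Rv IH (Rf _ _).
Qed.

Lemma f_inj : injective f.
Proof.
move=> u w e; have h := Riv (Rf u w); rewrite e in h.
have /andP [zv _] := Rin h.
by rewrite (Runiq h (Rrefl (p := (f w, u)) zv)).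
Qed.

Lemma iter_fix j a0 : iter j f a0 = a0 -> forall w, iter j f w = w.
Proof. by move=> e w; apply: (@Rfix a0); have := Rfj j a0 w; rewrite e. Qed.

Lemma iter_period p n : #|T| %| p ^ n -> forall w, iter (p ^ n) f w = w.
Proof.
move=> dT w.
pose sg := perm f_inj.
have sgX j u : (sg ^+ j)%g u = iter j f u.
  by rewrite permX; elim: j => //= j ->; rewrite permE.
suff: (#[sg]%g %| p ^ n) by rewrite order_dvdn => /eqP e; rewrite -sgX e perm1.
apply: dvdn_trans dT.
have acts : [acts <[sg]>%g, on [set: T] | 'P].
  by apply/subsetP=> x _; rewrite !inE /=; apply/subsetP=> y; rewrite !inE.
have Pt := orbit_partition acts.
rewrite -cardsT (@card_uniform_partition _ #[sg]%g _ _ _ Pt) ?dvdn_mull //.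
move=> B /imsetP [u _ ->].
have := card_orbit_stab 'P <[sg]>%g u.
suff ->: #|('C_(<[sg]>)[u | 'P])%g| = 1 by rewrite muln1.
suff ->: ('C_(<[sg]>)[u | 'P])%g = 1%g by rewrite cards1.
apply/trivgP/subsetP => t; rewrite inE => /andP [/cycleP [j ->] /astab1P].
move=> hj; have {}hj : iter j f u = u by rewrite -sgX; exact: hj.
rewrite inE; apply/eqP/permP => v.
by rewrite perm1 sgX (iter_fix hj).
Qed.
End Iter.
End Central.
End Loop.

Section Tr.
Variables (gT : finGroupType) (G H : {group gT}) (S : {set gT}).
Hypotheses (HG : (H \subset G)%g) (tS : is_transversal S (rcosets H G) G).
Local Notation U := (ST S).

Definition tact (x : U) (g : gT) : U :=
  odflt x [pick z : U | val z \in (H :* (val x * g))%g].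

Lemma SG : S \subset G.
Proof. by case/and3P: tS. Qed.

Lemma valG (x : U) : (val x \in G)%g.
Proof. exact: (subsetP SG) (valP x). Qed.

Lemma card1 g : (g \in G)%g -> #|S :&: (H :* g)%g| = 1.
Proof.
case/and3P: tS => _ _ /forall_inP h gG; apply/eqP; apply: h.
by rewrite mem_rcosets -[g]mul1g mem_mulg.
Qed.

Lemma ex_rep g : (g \in G)%g -> exists z : U, (val z \in H :* g)%g.
Proof.
move/card1/eqP/cards1P => [y hy].
have : y \in S :&: (H :* g)%g by rewrite hy set11.
rewrite inE => /andP [yS yH].
by exists (exist _ y yS : U).
Qed.

Lemma uniq_rep (z1 z2 : U) : (val z2 \in H :* val z1)%g -> z1 = z2.
Proof.
move=> h; apply: val_inj.
have /eqP/cards1P [y hy] := card1 (valG z1).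
have h1 : val z1 \in S :&: (H :* val z1)%g by rewrite inE (valP z1) rcoset_refl.
have h2 : val z2 \in S :&: (H :* val z1)%g by rewrite inE (valP z2) h.
by move: h1 h2; rewrite hy !inE => /eqP -> /eqP ->.
Qed.

Lemma actP x g : (g \in G)%g -> (val (tact x g) \in H :* (val x * g))%g.
Proof.
move=> gG; rewrite /tact; case: pickP => [y //|].
have [y hy] := ex_rep (groupM (valG x) gG).
by move/(_ y); rewrite hy.
Qed.

Lemma tact_coset x g : (g \in G)%g -> (H :* val (tact x g) = H :* (val x * g))%g.
Proof. by move=> gG; apply/rcoset_eqP; apply: actP. Qed.

Lemma tact_eq x g z : (g \in G)%g -> (H :* val z = H :* (val x * g))%g -> tact x g = z.
Proof.
move=> gG e; apply: uniq_rep; rewrite tact_coset // -e; exact: rcoset_refl.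
Qed.

Lemma tact_mul x g h : (g \in G)%g -> (h \in G)%g -> tact (tact x g) h = tact x (g * h)%g.
Proof.
move=> gG hG; apply/esym/(tact_eq (groupM gG hG)).
by rewrite tact_coset // rcosetM tact_coset // -rcosetM mulgA.
Qed.

Lemma tact1 x : tact x 1%g = x.
Proof. by apply: tact_eq => //; rewrite mulg1. Qed.

Lemma tact_core g : (g \in G)%g -> (forall x, tact x g = x) -> (g \in gcore H G)%g.
Proof.
move=> gG h; apply/bigcapP => y yG; rewrite mem_conjg.
have [z hz] := ex_rep yG.
have e : (H :* y = H :* val z)%g by apply/esym/rcoset_eqP.
have e2 : (H :* (y * g) = H :* y)%g.
  by rewrite rcosetM e -rcosetM -tact_coset // h.
have : (y * g \in H :* y)%g by rewrite -e2 rcoset_refl.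
by rewrite mem_rcoset conjgE invgK mulgA.
Qed.

Variable S1 : (1 \in S)%g.

Lemma tr_opE (x y : U) : @m_op (transversal_loop H S1) x y = tact x (val y).
Proof. by []. Qed.

Lemma rloop_tr : rloop (transversal_loop H S1).
Proof.
split.
- by move=> x; rewrite tr_opE; apply: tact_eq; rewrite ?valG // mul1g.
- by move=> x; rewrite tr_opE /= tact1.
- move=> a b; exists (tact b (val a)^-1)%g; rewrite tr_opE tact_mul ?groupV ?valG //.
  by rewrite mulVg tact1.
- move=> y y' a; rewrite !tr_opE => e.
  by rewrite -(tact1 y) -(tact1 y') -(mulgV (val a)) -!tact_mul ?groupV ?valG // e.
Qed.

Hypothesis SgenG : (<<S>> = G)%g.
Local Notation L := (transversal_loop H S1).

End Tr.


Section Tr2.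
Variables (gT : finGroupType) (G H : {group gT}) (S : {set gT}).
Hypotheses (HG : (H \subset G)%g) (tS : is_transversal S (rcosets H G) G).
Local Notation U := (ST S).
Variable S1 : (1 \in S)%g.
Hypothesis SgenG : (<<S>> = G)%g.
Local Notation L := (transversal_loop H S1).
Local Notation act := (tact H).

Lemma step (r : rel (m_T L)) (cr : @congruence L r) (z : rel (m_T (quot r)))
  (cz : is_center_cong z) (r' : rel (m_T L))
  (hr' : forall x y, r' x y = z (qcls r x) (qcls r y)) (p n : nat)
  (dS : #|S| = p ^ n) g (gG : (g \in G)%g) (hg : forall x, r' x (act x g)) :
  forall x, r x (act x (g ^+ (p ^ n))%g).
Proof.
have hL := rloop_tr tS S1.
have hQ := rloop_quot hL cr.
case: cz => [czc [R [[Rin Rrefl Rsym Rtr Rop] Rdiv [Ri Rii Riii Riv Rv]]] _].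
have Rii' : forall x y u, z x y -> exists! v, R (x, y) (u, v).
  by move=> x y u h; apply: Rii.
have Riii' : forall x y, R (x, x) (y, y) by move=> x y; apply: Riii.
pose q := qcls r.
pose A := [set g in G | [forall x, forall y,
   (r x y ==> r (act x g) (act y g)) &&
   (z (q x) (q y) ==> R (q x, q y) (q (act x g), q (act y g)))]]%g.
have gA : group_set A.
  apply/group_setP; split.
    rewrite inE group1; apply/forallP=> x; apply/forallP=> y; rewrite !(tact1 tS).
    by apply/andP; split; apply/implyP => // h; apply: Rrefl.
  move=> g1 g2; rewrite !inE => /andP [g1G /forallP h1] /andP [g2G /forallP h2].
  rewrite groupM //; apply/forallP=> x; apply/forallP=> y; rewrite -!(tact_mul tS) //.
  move: (h1 x) => /forallP /(_ y) /andP [/implyP a1 /implyP b1].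
  apply/andP; split; apply/implyP => h.
    by move: (h2 (act x g1)) => /forallP /(_ (act y g1)) /andP [/implyP a2 _]; exact: a2 (a1 h).
  have Rh := b1 h; have /andP [_ zh] := Rin _ _ Rh.
  move: (h2 (act x g1)) => /forallP /(_ (act y g1)) /andP [_ /implyP b2].
  exact: Rtr _ _ _ Rh (b2 zh).
have sA : (S \subset A)%g.
  apply/subsetP => s sS; rewrite inE (subsetP (SG tS) _ sS) /=.
  pose s' := (exist _ s sS : U).
  apply/forallP=> x; apply/forallP=> y.
  have -> : act x s = @m_op L x s' by [].
  have -> : act y s = @m_op L y s' by [].
  case: (cr) => [rr _ _ rop _].
  apply/andP; split; apply/implyP => h; first exact: rop.
  rewrite /q -!(qop cr); exact: (Rtrans_op hQ Rrefl Rop Riii').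
have GA : (G \subset A)%g.
  by rewrite -SgenG -[A]/(gval (Group gA)) gen_subG.
have RG g1 x y : (g1 \in G)%g -> z (q x) (q y) -> R (q x, q y) (q (act x g1), q (act y g1)).
  move=> g1G; move/(subsetP GA): g1G; rewrite inE => /andP [_ /forallP /(_ x) /forallP /(_ y)].
  by case/andP => _ /implyP.
move=> x0; set a := q x0; set b := q (act x0 g).
have zab : z a b by rewrite /a /b /q -hr'.
pose f u := odflt u [pick v | R (a, b) (u, v)].
have hf u : R (a, b) (u, f u).
  rewrite /f; case: pickP => [v //|].
  by have [v [hv _]] := Rii' a b u zab; move/(_ v); rewrite hv.
have Rfun u v : R (a, b) (u, v) -> f u = v by move=> h; exact: Runiq Rin Rii' _ _ _ _ _ (hf u) h.
case: (czc) => [zr zs zt _ _].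
have it j : z a (q (act x0 (g ^+ j))) && (q (act x0 (g ^+ j)) == iter j f a).
  elim: j => [|j /andP [zay /eqP ey]].
    by rewrite expg0 (tact1 tS) zr eqxx.
  rewrite expgSr -(tact_mul tS) ?groupX //.
  set y := act x0 (g ^+ j).
  have h1 := RG g x0 y gG zay.
  have h2 := Rexch hQ czc Rin Rrefl Rop Rdiv Riii' zab h1.
  have /andP [_ zyy] := Rin _ _ h2.
  by rewrite (zt _ _ _ zay zyy) /= -ey (Rfun _ _ h2).
have dQ : #|m_T (quot r)| %| p ^ n.
  apply: dvdn_trans (card_quot_dvd hL cr) _; rewrite -dS.
  by rewrite card_sig.
have := iter_period Rin Rrefl Rsym Rtr Rii' Riii' Riv Rv hf dQ a.
move: (it (p ^ n)) => /andP [_ /eqP <-] e.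
by rewrite -(qcls_eq cr) eq_sym; apply/eqP.
Qed.
End Tr2.

Theorem mainTheorem17 (gT : finGroupType) (G H : {group gT}) (S : {set gT})
  (S1 : (1 \in S)%g) (p n : nat) :
  (H \subset G)%g ->
  gcore H G = 1%g ->
  is_transversal S (rcosets H G) G ->
  <<S>>%g = G ->
  nilpotent_loop (transversal_loop H S1) ->
  prime p -> #|S| = p ^ n ->
  (p.-group H)%g /\ (p.-group G)%g.
Proof.
move=> HG core tS gen [m [th [h0 hm hs]]] pp dS.
have key j : j <= m -> forall g, (g \in G)%g ->
    (forall x, th j x (@tact _ H S x g)) -> forall x : m_T (transversal_loop H S1), @tact _ H S x (g ^+ (p ^ (n * j)))%g = x.
  elim: j => [|j IH] ltj g gG hg x.
    by rewrite muln0 expn0 expg1; move: (hg x); rewrite h0 => /eqP.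
  have [cj [z [cz hz]]] := hs j ltj.
  have st := step tS gen cj cz hz dS gG hg.
  have := IH (ltnW ltj) _ (groupX (p ^ n) gG) st x.
  by rewrite -expgnA -expnD -mulnS.
have Gp : (p.-group G)%g.
  apply/pgroupP => q qp qG.
  have [x xG ox] := Cauchy qp qG.
  have hx := key m (leqnn m) x xG (fun y => hm _ _).
  have : (x ^+ (p ^ (n * m)) \in gcore H G)%g.
    by apply: (tact_core tS); rewrite ?groupX.
  rewrite core inE => /eqP; move/eqP; rewrite -order_dvdn ox.
  by rewrite Euclid_dvdX // => /andP [qd _]; rewrite inE -(dvdn_prime2 qp pp).
split => //; exact: pgroupS HG Gp.
Qed.
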